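(* Let $\pi_\xi(a_t\mid s_t,s_{t+k})$ be a family of conditional densities with scalar parameter $\xi$, let $p^\star(s_{t+k}\mid s_t)$ be a fixed (parameter-independent) conditional density and $p(s_t)$ a density of states, and define the marginal policy $$\pi_{\mu(\xi)}(a_t\mid s_t)=\int p^\star(s_{t+k}\mid s_t)\,\pi_\xi(a_t\mid s_t,s_{t+k})\,ds_{t+k}.$$ Let $$F_\mu=\mathbb{E}\Big[\Big(\tfrac{\partial}{\partial\xi}\ln\pi_{\mu(\xi)}(\mathbf{a}_t\mid\mathbf{s}_t)\Big)^2\Big],\qquad F_\xi=\mathbb{E}\Big[\Big(\tfrac{\partial}{\partial\xi}\ln\pi_\xi(\mathbf{a}_t\mid\mathbf{s}_t,\mathbf{s}_{t+k})\Big)^2\Big],$$ where $\mathbf{s}_t\sim p$, $\mathbf{s}_{t+k}\sim p^\star(\cdot\mid\mathbf{s}_t)$, $\mathbf{a}_t\sim\pi_\xi(\cdot\mid\mathbf{s}_t,\mathbf{s}_{t+k})$. Assume $F_\mu$ and $F_\xi$ exist and that regularity conditions permitting differentiation with respect to $\xi$ under the integral sign hold. Then $F_\xi/F_\mu\ge 1$.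
   Context: Here $\pi_{\mu(\xi)}$ is the behavior-cloning policy obtained by marginalizing the inverse dynamics policy $\pi_\xi$ over the true future-state distribution $p^\star$, so that its parameter is regarded as a function of $\xi$; $F_\mu$ and $F_\xi$ are the Fisher informations of the BC and IDM policies with respect to $\xi$. *)

(* Defs.v *)
From HB Require Import structures.
From mathcomp Require Import all_boot all_order all_algebra.
From mathcomp Require Import all_classical all_reals all_analysis.
Set Implicit Arguments.
Unset Strict Implicit.
Unset Printing Implicit Defensive.
Import Order.TTheory GRing.Theory Num.Theory.
Import numFieldNormedType.Exports.
Local Open Scope classical_set_scope.
Local Open Scope ring_scope.

Definition bc_policy (R : realType) (dS : measure_display) (S : measurableType dS)
  (A : Type) (muS : {measure set S -> \bar R})
  (pstar : S -> S -> R) (pi : R -> S -> S -> A -> R) (x : R) (s : S) (a : A) : R :=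
  fine (\int[muS]_s' (pstar s s' * pi x s s' a)%:E).

Definition fisher_idm (R : realType) (dS dA : measure_display)
  (S : measurableType dS) (A : measurableType dA)
  (muS : {measure set S -> \bar R}) (muA : {measure set A -> \bar R})
  (p : S -> R) (pstar : S -> S -> R) (pi : R -> S -> S -> A -> R) (xi0 : R) : \bar R :=
  \int[muS]_s ((p s)%:E *
    \int[muS]_s' ((pstar s s')%:E *
      \int[muA]_a (pi xi0 s s' a *
                   ((derive1 (fun x => ln (pi x s s' a))) xi0) ^+ 2)%:E)).

(* F_mu = E_{s ~ p, a ~ pi_mu(xi0)(.|s)} [(d/dxi ln pi_mu(xi)(a|s))^2]
   (the law of (s_t, a_t) under the sampling scheme s ~ p, s' ~ p*, a ~ pi_xi
    has density p(s) pi_mu(xi0)(a|s)). *)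
Definition fisher_bc (R : realType) (dS dA : measure_display)
  (S : measurableType dS) (A : measurableType dA)
  (muS : {measure set S -> \bar R}) (muA : {measure set A -> \bar R})
  (p : S -> R) (pstar : S -> S -> R) (pi : R -> S -> S -> A -> R) (xi0 : R) : \bar R :=
  \int[muS]_s ((p s)%:E *
    \int[muA]_a (bc_policy muS pstar pi xi0 s a *
                 ((derive1 (fun x => ln (bc_policy muS pstar pi x s a))) xi0) ^+ 2)%:E).

(* Main.v *)
Require Import Defs.
From HB Require Import structures.
From mathcomp Require Import all_boot all_order all_algebra.
From mathcomp Require Import all_classical all_reals all_analysis measurable_realfun.
From mathcomp Require Import ring lra.
Import Order.TTheory GRing.Theory Num.Theory.
Import numFieldNormedType.Exports.
Local Open Scope classical_set_scope.
Local Open Scope ring_scope.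

Lemma dln (R : realType) (f : R -> R) x : derivable f x 1 -> 0 < f x ->
  derive1 (fun y => ln (f y)) x = derive1 f x / f x.
Proof.
move=> df fx0.
have -> : (fun y => ln (f y)) = (@ln R) \o f by [].
rewrite derive1_comp //; last first.
  by apply: ex_derive; apply: is_derive1_ln.
have hl := is_derive1_ln fx0.
rewrite derive1E derive_val mulrC.
by [].
Qed.

Lemma ge0_le_integral_nm d (T : measurableType d) (R : realType)
  (mu : {measure set T -> \bar R}) (f g : T -> \bar R) :
  (forall x, 0 <= f x)%E -> (forall x, f x <= g x)%E ->
  (\int[mu]_x f x <= \int[mu]_x g x)%E.
Proof.
move=> f0 fg.
have g0 : forall x, (0 <= g x)%E by move=> x; exact: le_trans (f0 x) (fg x).
rewrite (ge0_integralTE mu f0) (ge0_integralTE mu g0).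
apply: le_ereal_sup => _ [h /= hf <-]; exists h => //= x.
exact: le_trans (hf x) (fg x).
Qed.
Section T.
Context d1 d2 (T1 : measurableType d1) (T2 : measurableType d2) (R : realType).
Variable m1 : {measure set T1 -> \bar R}.
Hypothesis sf1 : sigma_finite setT m1.
Variable m2 : {measure set T2 -> \bar R}.
Hypothesis sf2 : sigma_finite setT m2.

Definition m1f : set T1 -> \bar R := m1.
Definition m2f : set T2 -> \bar R := m2.
HB.instance Definition _ := Measure.on m1f.
HB.instance Definition _ := @Measure_isSigmaFinite.Build _ _ _ m1f sf1.
HB.instance Definition _ := Measure.on m2f.
HB.instance Definition _ := @Measure_isSigmaFinite.Build _ _ _ m2f sf2.

Lemma my_tonelli (f : T1 * T2 -> \bar R) : measurable_fun setT (fun z : T1 * T2 => f z) ->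
  (forall z, 0 <= f z)%E ->
  (\int[m1]_x \int[m2]_y f (x, y) = \int[m2]_y \int[m1]_x f (x, y))%E.
Proof.
move=> mf f0.
have := (fubini_tonelli (m1:=[the sigma_finite_measure _ _ of m1f]) (m2:=[the sigma_finite_measure _ _ of m2f]) f mf f0).
exact.
Qed.
End T.
Lemma cs_step d (T : measurableType d) (R : realType)
  (mu : {measure set T -> \bar R}) (w q dd : T -> R) :
  measurable_fun setT w -> measurable_fun setT q -> measurable_fun setT dd ->
  (forall t, 0 <= w t) -> (forall t, 0 < q t) ->
  mu.-integrable setT (fun t => (w t * q t)%:E) ->
  mu.-integrable setT (fun t => (w t * dd t)%:E) ->
  0 < fine (\int[mu]_t (w t * q t)%:E) ->
  ((fine (\int[mu]_t (w t * dd t)%:E) ^+ 2 / fine (\int[mu]_t (w t * q t)%:E))%:E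
    <= \int[mu]_t (w t * (dd t ^+ 2 / q t))%:E)%E.
Proof.
move=> mw mq md w0 q0 iq id B0.
set B := fine _ in B0 *; set B' := fine _.
set J := (\int[mu]_t _)%E.
have J0 : (0 <= J)%E.
  apply: integral_ge0 => t _; rewrite lee_fin mulr_ge0 // divr_ge0 ?sqr_ge0 //.
  exact: ltW.
have mg : measurable_fun setT (fun t => w t * (dd t ^+ 2 / q t)).
  apply: measurable_funM => //.
  have -> : (fun t => dd t ^+ 2 / q t) = (fun t => dd t ^+ 2 * expR (- ln (q t))).
    apply/funext => t; rewrite expRN lnK //; exact: q0.
  apply: measurable_funM; first exact: measurable_funX.
  apply: measurableT_comp; first exact: measurable_expR.
  apply: measurableT_comp => //.
  exact: measurableT_comp (@measurable_ln R) mq.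
case: (eqVneq J +oo%E) => [->|Jfin]; first by rewrite leey.
have iJ : mu.-integrable setT (fun t => (w t * (dd t ^+ 2 / q t))%:E).
  apply/integrableP; split; first exact/measurable_EFinP.
  rewrite (_ : (fun x => _) = (fun t => (w t * (dd t ^+ 2 / q t))%:E)).
    by rewrite -/J ltey.
  apply/funext => t; rewrite gee0_abs // lee_fin mulr_ge0 // divr_ge0 ?sqr_ge0 //.
  exact: ltW.
set c := B' / B.
have iq' := integrableZl measurableT (c ^+ 2) iq.
have id' := integrableZl measurableT (2 * c) id.
have iL : mu.-integrable setT (fun t => ((2 * c) * (w t * dd t) - c ^+ 2 * (w t * q t))%:E).
  apply: (eq_integrable measurableT _ _ _ (integrableB measurableT id' iq')) => t _ /=.
  by rewrite EFinB !EFinM.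
apply: le_trans (le_integral measurableT iL iJ _); last first.
  move=> t _; rewrite lee_fin -subr_ge0.
  have qt := q0 t.
  have -> : w t * (dd t ^+ 2 / q t) - (2 * c * (w t * dd t) - c ^+ 2 * (w t * q t))
     = w t * ((dd t - c * q t) ^+ 2 / q t).
    by field; rewrite gt_eqF.
  by rewrite mulr_ge0 // divr_ge0 ?sqr_ge0 //; exact: ltW.
rewrite integralB_EFin //.
rewrite (eq_integral (fun t => ((2 * c)%:E * (w t * dd t)%:E)%E)); last first.
  by move=> t _; rewrite EFinM.
rewrite [X in (_ <= _ - X)%E](eq_integral (fun t => ((c ^+ 2)%:E * (w t * q t)%:E)%E)); last first.
  by move=> t _; rewrite EFinM.
rewrite !(integralZl measurableT) //.
have fB : (\int[mu]_t (w t * q t)%:E)%E = B%:E by rewrite fineK // (integrable_fin_num measurableT).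
have fB' : (\int[mu]_t (w t * dd t)%:E)%E = B'%:E by rewrite fineK // (integrable_fin_num measurableT).
rewrite fB fB' -!EFinM -EFinB lee_fin /c.
rewrite le_eqVlt; apply/orP; left; apply/eqP.
by field; rewrite gt_eqF.
Qed.
Theorem lemma2 (R : realType) (dS dA : measure_display)
  (S : measurableType dS) (A : measurableType dA)
  (muS : {measure set S -> \bar R}) (muA : {measure set A -> \bar R})
  (p : S -> R) (pstar : S -> S -> R) (pi : R -> S -> S -> A -> R) (xi0 : R) :
  (* reference measures *)
  sigma_finite setT muS -> sigma_finite setT muA ->
  (* p : density of states *)
  measurable_fun setT p -> (forall s, 0 <= p s) ->
  (\int[muS]_s (p s)%:E = 1)%E ->
  (* p* : parameter-independent conditional density of s_{t+k} given s_t *)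
  measurable_fun setT (fun z : S * S => pstar z.1 z.2) ->
  (forall s s', 0 <= pstar s s') ->
  (forall s, (\int[muS]_s' (pstar s s')%:E = 1)%E) ->
  (* pi_xi : family of conditional densities of a_t given (s_t, s_{t+k}) *)
  (forall x, measurable_fun setT (fun z : S * S * A => pi x z.1.1 z.1.2 z.2)) ->
  (forall x s s' a, 0 < pi x s s' a) ->
  (forall x s s', (\int[muA]_a (pi x s s' a)%:E = 1)%E) ->
  (* regularity: differentiability in xi at xi0 *)
  (forall s s' a, derivable (fun x => pi x s s' a) xi0 1) ->
  measurable_fun setT
    (fun z : S * S * A => (derive1 (fun x => pi x z.1.1 z.1.2 z.2)) xi0) ->
  (* regularity: the marginal integral exists, and may be differentiated
     under the integral sign at xi0 *)
  (forall x s a, muS.-integrable setT (fun s' => (pstar s s' * pi x s s' a)%:E)) ->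
  (forall s a, muS.-integrable setT
     (fun s' => (pstar s s' * (derive1 (fun x => pi x s s' a)) xi0)%:E)) ->
  (forall s a, derivable (fun x => bc_policy muS pstar pi x s a) xi0 1 /\
     (derive1 (fun x => bc_policy muS pstar pi x s a)) xi0 =
       fine (\int[muS]_s' (pstar s s' * (derive1 (fun x => pi x s s' a)) xi0)%:E)) ->
  (* F_mu and F_xi exist (are finite), and the ratio is meaningful *)
  (fisher_bc muS muA p pstar pi xi0 < +oo)%E ->
  (fisher_idm muS muA p pstar pi xi0 < +oo)%E ->
  (0 < fisher_bc muS muA p pstar pi xi0)%E ->
  1 <= fine (fisher_idm muS muA p pstar pi xi0) /
       fine (fisher_bc muS muA p pstar pi xi0).
Proof.
move=> sfS sfA mp p0 p1 mps ps0 ps1 mpi pi0 pi1 dpi mdpi ibc idbc dbc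
  fbcoo fidoo fbc0.
set dd := fun s s' a => derive1 (fun x => pi x s s' a) xi0.
have E1 : forall s s' a, pi xi0 s s' a * (derive1 (fun x => ln (pi x s s' a)) xi0) ^+ 2
    = dd s s' a ^+ 2 / pi xi0 s s' a.
  move=> s s' a; rewrite dln //; have := pi0 xi0 s s' a => h.
  rewrite /dd; field; exact: lt0r_neq0.
have mG : measurable_fun setT
    (fun z : S * S * A => dd z.1.1 z.1.2 z.2 ^+ 2 / pi xi0 z.1.1 z.1.2 z.2).
  have -> : (fun z : S * S * A => dd z.1.1 z.1.2 z.2 ^+ 2 / pi xi0 z.1.1 z.1.2 z.2)
     = (fun z => dd z.1.1 z.1.2 z.2 ^+ 2 * expR (- ln (pi xi0 z.1.1 z.1.2 z.2))).
    apply/funext => z; rewrite expRN lnK //; exact: pi0.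
  apply: measurable_funM; first exact: measurable_funX.
  apply: measurableT_comp; first exact: measurable_expR.
  apply: measurableT_comp => //.
  exact: measurableT_comp (@measurable_ln R) (mpi xi0).
(* pointwise Cauchy-Schwarz step *)
have stepA : forall s a,
  ((bc_policy muS pstar pi xi0 s a *
     (derive1 (fun x => ln (bc_policy muS pstar pi x s a)) xi0) ^+ 2)%:E
   <= \int[muS]_s' (pstar s s' * (dd s s' a ^+ 2 / pi xi0 s s' a))%:E)%E.
  move=> s a.
  have B0 : 0 <= bc_policy muS pstar pi xi0 s a.
    by apply: fine_ge0; apply: integral_ge0 => s' _; rewrite lee_fin mulr_ge0 // ltW.
  case: (eqVneq (bc_policy muS pstar pi xi0 s a) 0) => [->|Bn0].
    rewrite mul0r; apply: integral_ge0 => s' _; rewrite lee_fin mulr_ge0 //.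
    by rewrite divr_ge0 ?sqr_ge0 // ltW.
  have Bp : 0 < bc_policy muS pstar pi xi0 s a by rewrite lt0r Bn0.
  rewrite dln //; last by case: (dbc s a).
  have [_ ->] := dbc s a.
  set B := bc_policy _ _ _ _ _ _ in Bp Bn0 B0 *.
  set B' := fine _.
  have -> : B * (B' / B) ^+ 2 = B' ^+ 2 / B by field.
  apply: (@cs_step _ _ R muS (fun s' => pstar s s') (fun s' => pi xi0 s s' a)
            (fun s' => dd s s' a)) => //.
  - have h := measurableT_comp mps (measurable_fun_pair (measurable_cst s) (@measurable_id _ S setT)).
    exact: h.
  - have h := measurableT_comp (mpi xi0) (measurable_fun_pair
       (measurable_fun_pair (measurable_cst s) (@measurable_id _ S setT)) (measurable_cst a)).
    exact: h.
  - have h := measurableT_comp mdpi (measurable_fun_pair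
       (measurable_fun_pair (measurable_cst s) (@measurable_id _ S setT)) (measurable_cst a)).
    exact: h.
  - exact: (idbc s a).
have stepB : forall s,
  (\int[muA]_a (bc_policy muS pstar pi xi0 s a *
     (derive1 (fun x => ln (bc_policy muS pstar pi x s a)) xi0) ^+ 2)%:E
   <= \int[muS]_s' ((pstar s s')%:E *
      \int[muA]_a (pi xi0 s s' a *
                   ((derive1 (fun x => ln (pi x s s' a))) xi0) ^+ 2)%:E))%E.
  move=> s.
  have mF : measurable_fun setT
      (fun z : A * S => (pstar s z.2 * (dd s z.2 z.1 ^+ 2 / pi xi0 s z.2 z.1))%:E).
    apply/measurable_EFinP; apply: measurable_funM.
      exact: (measurableT_comp mps (measurable_fun_pair (measurable_cst s) measurable_snd)).
    exact: (measurableT_comp mG (measurable_fun_pair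
       (measurable_fun_pair (measurable_cst s) measurable_snd) measurable_fst)).
  have F0 : forall z : A * S,
      (0 <= (pstar s z.2 * (dd s z.2 z.1 ^+ 2 / pi xi0 s z.2 z.1))%:E)%E.
    by move=> z; rewrite lee_fin mulr_ge0 // divr_ge0 ?sqr_ge0 // ltW.
  apply: le_trans.
    apply: ge0_le_integral_nm; last exact: stepA.
    move=> a; rewrite lee_fin mulr_ge0 ?sqr_ge0 //.
    by apply: fine_ge0; apply: integral_ge0 => s' _; rewrite lee_fin mulr_ge0 // ltW.
  rewrite (@my_tonelli _ _ _ _ _ muA sfA muS sfS _ mF F0).
  rewrite le_eqVlt; apply/orP; left; apply/eqP; apply: eq_integral => s' _.
  rewrite [X in _ = (_ * X)%E](eq_integral (fun a => (dd s s' a ^+ 2 / pi xi0 s s' a)%:E)); last first.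
    by move=> a _; rewrite E1.
  rewrite -ge0_integralZl_EFin //; last 2 first.
  - by move=> a _; rewrite lee_fin divr_ge0 ?sqr_ge0 // ltW.
  - apply/measurable_EFinP.
    exact: (measurableT_comp mG (measurable_fun_pair
       (measurable_fun_pair (measurable_cst s) (measurable_cst s')) (@measurable_id _ A setT))).
have le_f : (fisher_bc muS muA p pstar pi xi0 <= fisher_idm muS muA p pstar pi xi0)%E.
  rewrite /fisher_bc /fisher_idm.
  apply: ge0_le_integral_nm.
    move=> s; apply: mule_ge0; first by rewrite lee_fin.
    apply: integral_ge0 => a _; rewrite lee_fin mulr_ge0 ?sqr_ge0 //.
    by apply: fine_ge0; apply: integral_ge0 => s' _; rewrite lee_fin mulr_ge0 // ltW.
  move=> s; apply: lee_wpmul2l; first by rewrite lee_fin.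
  exact: stepB.
have fbf : fisher_bc muS muA p pstar pi xi0 \is a fin_num.
  by rewrite ge0_fin_numE // ltW.
have fif : fisher_idm muS muA p pstar pi xi0 \is a fin_num.
  by rewrite ge0_fin_numE // (le_trans (ltW fbc0) le_f).
have fb0 : 0 < fine (fisher_bc muS muA p pstar pi xi0).
  by rewrite fine_gt0 // fbc0 fbcoo.
have := fine_le fbf fif le_f => h.
rewrite -subr_ge0.
have -> : fine (fisher_idm muS muA p pstar pi xi0) /
   fine (fisher_bc muS muA p pstar pi xi0) - 1 =
   (fine (fisher_idm muS muA p pstar pi xi0) - fine (fisher_bc muS muA p pstar pi xi0))
   / fine (fisher_bc muS muA p pstar pi xi0).
  by field; rewrite gt_eqF.
by rewrite divr_ge0 ?subr_ge0 // ltW.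
Qed.
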